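(* For every integer $N\ge 2$, every $\delta<0$ and every $\theta\in\mathbb{R}$, $$\lim_{\beta\to+\infty}E_r(\theta)=\begin{cases}\frac{N^2\theta}{2}\Big(\frac{1}{N-1}+H_N\Big) & \theta<-\delta,\\ N^2\theta H_N & \theta=-\delta,\\ \frac{N^2\theta}{2}\big(1+H_N\big) & \theta>-\delta,\end{cases}\qquad \lim_{\beta\to+\infty}E_p(\theta)=\begin{cases}\frac{N^2\theta}{2}\big(1+H_N\big) & \theta<-\delta,\\ N^2\theta H_N & \theta=-\delta,\\ \frac{N^2\theta}{2}\Big(H_N+\frac{1}{N-1}\Big) & \theta>-\delta.\end{cases}$$
   Context: Fix an integer $N\ge 2$ and $\delta<0$. For $\beta>0$ and $\theta\in\mathbb{R}$ put $x=\beta(\theta+\delta)$; for $1\le i\le N-1$ define $u_{i,i+1}=\frac{i(N-i)}{N^2}(1+e^{-x})^{-1}$, $u_{i,i-1}=\frac{i(N-i)}{N^2}(1+e^{x})^{-1}$, $u_{i,i}=1-u_{i,i+1}-u_{i,i-1}$, $u_{i,j}=0$ for $|i-j|\ge2$; let $U=(u_{ij})_{i,j=1}^{N-1}$, $(n_{ij})_{i,j=1}^{N-1}=(I-U)^{-1}$, and $E_r(\theta)=\frac{\theta}{2}\sum_{i=1}^{N-1}(n_{1i}+n_{N-1,i})\,i$, $E_p(\theta)=\frac{\theta}{2}\sum_{i=1}^{N-1}(n_{1i}+n_{N-1,i})(N-i)$ (these depend on $\beta$). Here $H_N=\sum_{j=1}^{N-1}\frac1j$. *)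

(* Defs.v *)
From HB Require Import structures.
From mathcomp Require Import all_boot all_order all_algebra.
From mathcomp Require Import all_classical all_reals all_analysis.
Set Implicit Arguments. Unset Strict Implicit. Unset Printing Implicit Defensive.
Import Order.TTheory GRing.Theory Num.Theory.
Import numFieldNormedType.Exports.
Local Open Scope ring_scope.

Section Defs.
Variable R : realType.

Definition xval (beta theta delta : R) : R := beta * (theta + delta).

(* 1-based entries u_{i,j}, 1 <= i,j <= N-1 *)
Definition ucoef (N i : nat) : R := ((i * (N - i))%:R) / ((N ^ 2)%:R).
Definition uup (N : nat) (delta beta theta : R) (i : nat) : R :=
  ucoef N i * (1 + expR (- xval beta theta delta))^-1.
Definition udown (N : nat) (delta beta theta : R) (i : nat) : R :=
  ucoef N i * (1 + expR (xval beta theta delta))^-1.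
Definition uentry (N : nat) (delta beta theta : R) (i j : nat) : R :=
  if j == i.+1 then uup N delta beta theta i
  else if j.+1 == i then udown N delta beta theta i
  else if j == i then 1 - uup N delta beta theta i - udown N delta beta theta i
  else 0.

(* U as an (N-1)x(N-1) matrix; row/column index k : 'I_(N-1) stands for k+1 *)
Definition Umat (N : nat) (delta beta theta : R) : 'M[R]_(N.-1) :=
  \matrix_(i, j) uentry N delta beta theta i.+1 j.+1.

Definition Nmat (N : nat) (delta beta theta : R) : 'M[R]_(N.-1) :=
  invmx (1%:M - Umat N delta beta theta).

(* nat-indexed (0-based) access to a square matrix, 0 outside the range *)
Definition mxe (n : nat) (A : 'M[R]_n) (i j : nat) : R :=
  match (insub i : option 'I_n), (insub j : option 'I_n) with
  | Some i', Some j' => A i' j'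
  | _, _ => 0
  end.

(* n_{ij}, 1-based, 1 <= i,j <= N-1 *)
Definition nent (N : nat) (delta beta theta : R) (i j : nat) : R :=
  mxe (Nmat N delta beta theta) i.-1 j.-1.

Definition E_r (N : nat) (delta theta beta : R) : R :=
  theta / 2 * \sum_(1 <= i < N)
    (nent N delta beta theta 1 i + nent N delta beta theta N.-1 i) * i%:R.

Definition E_p (N : nat) (delta theta beta : R) : R :=
  theta / 2 * \sum_(1 <= i < N)
    (nent N delta beta theta 1 i + nent N delta beta theta N.-1 i) * (N - i)%:R.

Definition harm (N : nat) : R := \sum_(1 <= j < N) (j%:R)^-1.

End Defs.

(* Main.v *)
Require Import Defs.
From HB Require Import structures.
From mathcomp Require Import all_boot all_order all_algebra.
From mathcomp Require Import all_classical all_reals all_analysis.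
From mathcomp Require Import zify ring lra.
Import Order.TTheory GRing.Theory Num.Theory.
Import numFieldNormedType.Exports.
Local Open Scope classical_set_scope.
Local Open Scope ring_scope.

Section Gen.
Context {R : realType} {T : Type} (F : set_system T) {FF : Filter F}.

Lemma cvg_sumR (I : Type) (s : seq I) (P : pred I) (f : I -> T -> R) (a : I -> R) :
  (forall i, f i x @[x --> F] --> a i) ->
  \sum_(i <- s | P i) f i x @[x --> F] --> \sum_(i <- s | P i) a i.
Proof.
move=> H; elim: s => [|i s IH].
  rewrite big_nil; under eq_cvg do rewrite big_nil; exact: cvg_cst.
rewrite big_cons; under eq_cvg do rewrite big_cons.
case: (P i) => //; exact: cvgD.
Qed.

Lemma cvg_prodR (I : Type) (s : seq I) (P : pred I) (f : I -> T -> R) (a : I -> R) :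
  (forall i, f i x @[x --> F] --> a i) ->
  \prod_(i <- s | P i) f i x @[x --> F] --> \prod_(i <- s | P i) a i.
Proof.
move=> H; elim: s => [|i s IH].
  rewrite big_nil; under eq_cvg do rewrite big_nil; exact: cvg_cst.
rewrite big_cons; under eq_cvg do rewrite big_cons.
case: (P i) => //; exact: cvgM.
Qed.

Lemma cvg_det {n} (A : T -> 'M[R]_n) (B : 'M[R]_n) :
  (forall i j, A x i j @[x --> F] --> B i j) ->
  \det (A x) @[x --> F] --> \det B.
Proof.
move=> H; rewrite /determinant; apply: cvg_sumR => s.
apply: cvgM; first exact: cvg_cst.
by apply: cvg_prodR => i; apply: H.
Qed.

Lemma cvg_adj {n} (A : T -> 'M[R]_n) (B : 'M[R]_n) :
  (forall i j, A x i j @[x --> F] --> B i j) ->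
  forall i j, \adj (A x) i j @[x --> F] --> \adj B i j.
Proof.
move=> H i j; rewrite mxE; under eq_cvg do rewrite mxE.
rewrite /cofactor; apply: cvgM; first exact: cvg_cst.
apply: cvg_det => k l; rewrite !mxE; under eq_cvg do rewrite !mxE.
exact: H.
Qed.

Lemma cvg_invmx {n} (A : T -> 'M[R]_n) (B : 'M[R]_n) :
  B \in unitmx ->
  (forall i j, A x i j @[x --> F] --> B i j) ->
  forall i j, invmx (A x) i j @[x --> F] --> invmx B i j.
Proof.
move=> uB H i j.
have dB : \det B != 0 by move: uB; rewrite unitmxE unitfE.
have cd : \det (A x) @[x --> F] --> \det B := cvg_det A B H.
have ev : \forall x \near F, A x \in unitmx.
  have : \forall x \near F, `|\det (A x) - \det B| < `|\det B|.
    move/cvgrPdist_lt: cd => /(_ `|\det B|); rewrite normr_gt0 => /(_ dB).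
    by apply: filterS => x; rewrite distrC.
  apply: filterS => x hx; rewrite unitmxE unitfE; apply/negP => /eqP h0.
  by move: hx; rewrite h0 sub0r normrN ltxx.
apply: (@cvg_trans _ (((\det (A x))^-1 * \adj (A x) i j) @[x --> F])).
  apply: (@near_eq_cvg _ _ F FF (fun x => (\det (A x))^-1 * \adj (A x) i j) (fun x => invmx (A x) i j)).
  near=> x.
  have ux : A x \in unitmx by near: x; exact: ev.
  by rewrite /invmx ux [in RHS]mxE.
rewrite /invmx uB mxE; apply: cvgM; first exact: cvgV.
exact: (cvg_adj A B H).
Unshelve. all: by end_near.
Qed.

End Gen.

Ltac decide_eqs := repeat match goal with
 | |- context[(?a == ?b :> nat)] => first [ rewrite (_ : (a == b) = true); [|by apply/eqP; lia] | rewrite (_ : (a == b) = false); [|by apply/negbTE/eqP; lia] ] end.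

Section Spec.
Variable R : realType.

Definition uentryP (N : nat) (p q : R) (i j : nat) : R :=
  if j == i.+1 then ucoef R N i * p
  else if j.+1 == i then ucoef R N i * q
  else if j == i then 1 - ucoef R N i * p - ucoef R N i * q
  else 0.

Definition LP (N : nat) (p q : R) : 'M[R]_(N.-1) :=
  1%:M - \matrix_(i, j) uentryP N p q i.+1 j.+1.

Lemma ucoef0 N : ucoef R N 0 = 0.
Proof. by rewrite /ucoef mul0n mul0r. Qed.

Lemma ucoefN N : ucoef R N N = 0.
Proof. by rewrite /ucoef subnn muln0 mul0r. Qed.

Lemma sum_delta n m (f : nat -> R) :
  \sum_(k < n) ((k : nat) == m)%:R * f k = (m < n)%:R * f m.
Proof.
rewrite -(big_mkord xpredT (fun k => (k == m)%:R * f k)).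
elim: n => [|n IH]; first by rewrite big_nil ltn0 mul0r.
rewrite big_nat_recr //= IH.
case: (ltngtP m n) => [h|h|->]; rewrite ?ltnSn ?ltnn ?mul0r ?add0r ?addr0 //.
- by rewrite ltnS ltnW.
- by rewrite ltnS leqNgt h mul0r.
Qed.

Lemma uentryP_split N p q (k j : nat) :
  uentryP N p q k.+1 j.+1 =
  (k == j)%:R * (1 - ucoef R N j.+1 * p - ucoef R N j.+1 * q)
  + (k.+1 == j)%:R * (ucoef R N j * p) + (k == j.+1)%:R * (ucoef R N j.+2 * q).
Proof.
rewrite /uentryP.
rewrite !eqSS.
by do 6 (try match goal with |- context[(?x == ?y)] => case: (@eqP _ x y) => ?; try subst end); rewrite ?mul0r ?mul1r ?addr0 ?add0r //; exfalso; lia.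
Qed.

Lemma prodLP N p q (g : nat -> nat -> R) (i j : 'I_N.-1) :
  ((\matrix_(a, b) g a.+1 b.+1) *m LP N p q) i j =
   g i.+1 j.+1 * (ucoef R N j.+1 * (p + q)) - g i.+1 j * (ucoef R N j * p)
   - g i.+1 j.+2 * (ucoef R N j.+2 * q).
Proof.
rewrite !mxE.
have e : forall k : 'I_N.-1, (\matrix_(a, b) g a.+1 b.+1) i k * LP N p q k j =
   ((k : nat) == j)%:R * (g i.+1 k.+1 * (ucoef R N j.+1 * (p + q)))
   - ((k : nat).+1 == j)%:R * (g i.+1 k.+1 * (ucoef R N j * p))
   - ((k : nat) == j.+1)%:R * (g i.+1 k.+1 * (ucoef R N j.+2 * q)).
  move=> k; rewrite !mxE uentryP_split.
  change (k == j) with ((k : nat) == (j : nat)); ring.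
rewrite (eq_bigr _ (fun k _ => e k)) !sumrB.
rewrite (sum_delta _ _ (fun k => g i.+1 k.+1 * (ucoef R N j.+1 * (p + q)))).
rewrite (sum_delta _ _ (fun k => g i.+1 k.+1 * (ucoef R N j.+2 * q))).
rewrite ltn_ord mul1r.
have -> : \sum_(k < N.-1) ((k : nat).+1 == j)%:R * (g i.+1 k.+1 * (ucoef R N j * p))
   = g i.+1 j * (ucoef R N j * p).
  clear e; case: j => [[|j'] Hj] /=.
    rewrite ucoef0 mul0r mulr0; apply: big1 => k _; by rewrite mul0r.
  under eq_bigr do rewrite eqSS.
  rewrite (sum_delta _ _ (fun k => g i.+1 k.+1 * (ucoef R N j'.+1 * p))).
  by rewrite (ltn_trans _ Hj) ?mul1r.
case: (ltnP j.+1 N.-1) => h; first by rewrite mul1r.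
have -> : j.+2 = N by have := ltn_ord j; lia.
by rewrite ucoefN !(mul0r, mulr0).
Qed.


Lemma ucoef_neq0 N b : (0 < b < N)%N -> ucoef R N b != 0.
Proof.
move=> /andP[b0 bN]; rewrite /ucoef mulf_neq0 //.
  by rewrite pnatr_eq0 muln_eq0 negb_or -!lt0n b0 subn_gt0.
by rewrite invr_eq0 pnatr_eq0 expn_eq0 /=; apply/eqP; lia.
Qed.

Lemma ucoef_eq0 N b : ~~ (0 < b < N)%N -> ucoef R N b = 0.
Proof.
move=> h; rewrite /ucoef; have [->|b0] := posnP b; first by rewrite mul0n mul0r.
rewrite b0 /= -leqNgt in h.
rewrite (_ : (N - b)%N = 0%N); last by apply/eqP; rewrite subn_eq0.
by rewrite muln0 mul0r.
Qed.

Definition gen N (H : nat -> nat -> R) a b := H a b / ucoef R N b.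
Definition hg N (H : nat -> nat -> R) a b := if (0 < b < N)%N then H a b else 0.

Lemma gen_mul N H a b r : gen N H a b * (ucoef R N b * r) = hg N H a b * r.
Proof.
rewrite /gen /hg; case: ifP => h.
  by rewrite mulrA divfK // ucoef_neq0 // h.
by rewrite ucoef_eq0 ?h // mul0r mulr0.
Qed.

Lemma inv_LP N p q H : (2 <= N)%N ->
  (forall a b, (0 < a < N)%N -> (0 < b < N)%N ->
     hg N H a b * (p + q) - hg N H a b.-1 * p - hg N H a b.+1 * q = (a == b)%:R) ->
  LP N p q \in unitmx /\ invmx (LP N p q) = \matrix_(a, b) gen N H a.+1 b.+1.
Proof.
move=> N2 hH.
set M := \matrix_(a, b) gen N H a.+1 b.+1.
have ML : M *m LP N p q = 1%:M.
  apply/matrixP => i j; rewrite prodLP !gen_mul mxE hH //.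
  - by rewrite /=; have := ltn_ord i; lia.
  - by rewrite /=; have := ltn_ord j; lia.
have [_ uL] := mulmx1_unit ML.
by split => //; rewrite -[invmx _]mul1mx -ML -mulmxA mulmxV // mulmx1.
Qed.


Ltac decide_bools := repeat match goal with
 | |- context[(?a == ?b :> nat)] => first [ rewrite (_ : (a == b) = true); [|by apply/eqP; lia] | rewrite (_ : (a == b) = false); [|by apply/negbTE/eqP; lia] ]
 | |- context[leq ?a ?b] => first [ rewrite (_ : (leq a b) = true); [|by lia] | rewrite (_ : (leq a b) = false); [|by apply/negbTE; lia] ]
 end.

Definition HA (a b : nat) : R := (a <= b)%N%:R.
Definition HC (a b : nat) : R := (b <= a)%N%:R.
Definition HB N (a b : nat) : R :=
  2 * (if (a <= b)%N then a%:R * (N%:R - b%:R) else b%:R * (N%:R - a%:R)) / N%:R.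

Lemma idA N a b : (0 < a < N)%N -> (0 < b < N)%N ->
  hg N HA a b * (1 + 0) - hg N HA a b.-1 * 1 - hg N HA a b.+1 * 0 = (a == b)%:R.
Proof.
move=> ha hb; rewrite /hg /HA !mulr0 subr0 addr0 !mulr1.
by do 8 (try match goal with |- context[leq ?x ?y] => case: (leqP x y) => ? end);
  rewrite /= ?subr0 ?subrr ?mul1r ?mul0r //; (try match goal with |- context[(?x == ?y)] => case: (@eqP _ x y) => ? end); rewrite ?subr0 ?subrr //; exfalso; lia.
Qed.

Lemma idC N a b : (0 < a < N)%N -> (0 < b < N)%N ->
  hg N HC a b * (0 + 1) - hg N HC a b.-1 * 0 - hg N HC a b.+1 * 1 = (a == b)%:R.
Proof.
move=> ha hb; rewrite /hg /HC !mulr0 subr0 add0r !mulr1.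
by do 8 (try match goal with |- context[leq ?x ?y] => case: (leqP x y) => ? end);
  rewrite /= ?subr0 ?subrr ?mul1r ?mul0r //; (try match goal with |- context[(?x == ?y)] => case: (@eqP _ x y) => ? end); rewrite ?subr0 ?subrr //; exfalso; lia.
Qed.

Lemma HB_le N a c : (a <= c)%N -> HB N a c = 2 * (a%:R * (N%:R - c%:R)) / N%:R.
Proof. by move=> h; rewrite /HB h. Qed.
Lemma HB_ge N a c : (c <= a)%N -> HB N a c = 2 * (c%:R * (N%:R - a%:R)) / N%:R.
Proof.
move=> h; rewrite /HB; case: ifP => // h2.
by have -> : a = c by apply/eqP; rewrite eqn_leq h h2.
Qed.

Lemma hgB N a c : (0 < a)%N -> (a <= N)%N -> (c <= N)%N -> hg N (HB N) a c = HB N a c.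
Proof.
move=> a0 aN cN; rewrite /hg; case: ifP => // h.
have [->|->] : c = 0%N \/ c = N by lia.
  by rewrite HB_ge // mul0r mulr0 mul0r.
by rewrite HB_le ?subrr ?mulr0 ?mul0r //; lia.
Qed.

Lemma idB N a b : (0 < a < N)%N -> (0 < b < N)%N ->
  hg N (HB N) a b * (2^-1 + 2^-1) - hg N (HB N) a b.-1 * 2^-1
   - hg N (HB N) a b.+1 * 2^-1 = (a == b)%:R.
Proof.
move=> ha hb; rewrite !hgB //; try lia.
have N0 : N%:R != 0 :> R by rewrite pnatr_eq0; lia.
case: b hb => [|b] hb; first lia.
rewrite succnK.
have e1 : (b.+1%:R : R) = b%:R + 1 by rewrite -natr1.
have e2 : (b.+2%:R : R) = b%:R + 2 by rewrite -natr1 -natr1; ring.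
case: (leqP a b) => h1.
  rewrite !HB_le //; try lia.
  rewrite (_ : (a == b.+1) = false); last by apply/negbTE; lia.
  rewrite e1 e2 /= ?mulr0n ?mulr1n; field; do ?exact: N0.
case: (leqP a b.+1) => h2.
  have -> : a = b.+1 by lia.
  rewrite eqxx (HB_ge N b.+1 b) // (HB_le N b.+1 b.+1) // (HB_le N b.+1 b.+2) //.
  rewrite e1 e2 /= ?mulr0n ?mulr1n. field; do ?exact: N0.
rewrite (_ : (a == b.+1) = false); last by apply/negbTE; lia.
rewrite !HB_ge //; try lia.
rewrite e1 e2 /= ?mulr0n ?mulr1n; field; do ?exact: N0.
Qed.
End Spec.

Section Lim.
Variable R : realType.

Lemma cvg_LP N (Pf Qf : R -> R) p0 q0 :
  Pf b @[b --> +oo] --> p0 -> Qf b @[b --> +oo] --> q0 ->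
  forall i j, LP R N (Pf b) (Qf b) i j @[b --> +oo] --> LP R N p0 q0 i j.
Proof.
move=> hP hQ i j; rewrite /LP !mxE; under eq_cvg do rewrite !mxE.
apply: cvgB; first exact: cvg_cst.
rewrite /uentryP; case: ifP => _.
  by apply: cvgM; [exact: cvg_cst|].
case: ifP => _; first by apply: cvgM; [exact: cvg_cst|].
case: ifP => _; last exact: cvg_cst.
apply: cvgB; [apply: cvgB; [exact: cvg_cst|]|]; apply: cvgM => //; exact: cvg_cst.
Qed.

Lemma cvg_mxe n (A : R -> 'M[R]_n) (B : 'M[R]_n) a c :
  (forall i j, A x i j @[x --> +oo] --> B i j) ->
  mxe (A x) a c @[x --> +oo] --> mxe B a c.
Proof.
move=> H; rewrite /mxe; case: (insub a) => [a'|]; last exact: cvg_cst.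
case: (insub c) => [c'|]; last exact: cvg_cst.
exact: H.
Qed.


Lemma mxe_gen N H a b : (a < N.-1)%N -> (b < N.-1)%N ->
  mxe (\matrix_(i, j) gen R N H i.+1 j.+1 : 'M[R]_(N.-1)) a b = gen R N H a.+1 b.+1.
Proof.
move=> ha hb; rewrite /mxe.
case: insubP => [a' _ ea|]; last by rewrite ha.
case: insubP => [b' _ eb|]; last by rewrite hb.
by rewrite mxE ea eb.
Qed.

Lemma expR_lim (s : R) : 0 < s -> expR (- (b * s)) @[b --> +oo] --> 0.
Proof.
move=> s0.
have h : (b * s) @[b --> +oo] --> +oo.
  by apply: (@gt0_cvgMly R _ _ s (fun b => b) s0); exact: cvg_id.
have := cvg_comp (fun b => b * s) (fun x => expR (- x)) h (@cvgr_expR R). by [].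
Qed.

Lemma inv1p_lim (e : R -> R) : e b @[b --> +oo] --> 0 ->
  (1 + e b)^-1 @[b --> +oo] --> (1 : R).
Proof.
move=> h.
have := @cvgV R R _ _ (fun b => 1 + e b) 1 (oner_neq0 R) .
rewrite invr1; apply.
by rewrite -[X in _ --> X]addr0; apply: cvgD => //; exact: cvg_cst.
Qed.

Lemma frac_lim (e : R -> R) : e b @[b --> +oo] --> 0 ->
  (e b / (1 + e b)) @[b --> +oo] --> (0 : R).
Proof.
move=> h; rewrite -(mul0r 1); apply: cvgM => //; exact: inv1p_lim.
Qed.

End Lim.

Section Main.
Variable R : realType.

Lemma main_gen N (delta theta p0 q0 : R) H : (2 <= N)%N ->
  (1 + expR (- xval beta theta delta))^-1 @[beta --> +oo] --> p0 ->
  (1 + expR (xval beta theta delta))^-1 @[beta --> +oo] --> q0 ->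
  (forall a b, (0 < a < N)%N -> (0 < b < N)%N ->
     hg R N H a b * (p0 + q0) - hg R N H a b.-1 * p0 - hg R N H a b.+1 * q0 = (a == b)%:R) ->
  (E_r N delta theta beta @[beta --> +oo] -->
     theta / 2 * \sum_(1 <= i < N) (gen R N H 1 i + gen R N H N.-1 i) * i%:R) /\
  (E_p N delta theta beta @[beta --> +oo] -->
     theta / 2 * \sum_(1 <= i < N) (gen R N H 1 i + gen R N H N.-1 i) * (N - i)%:R).
Proof.
move=> N2 hP hQ hH.
have [uL eL] := @inv_LP R N p0 q0 H N2 hH.
have cI : forall i j, Nmat N delta x theta i j @[x --> +oo] --> invmx (LP R N p0 q0) i j.
  move=> i j.
  exact: (cvg_invmx _ (fun x => LP R N (1 + expR (- xval x theta delta))^-1 (1 + expR (xval x theta delta))^-1) _ uL (cvg_LP R N _ _ _ _ hP hQ) i j).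
have key : forall a b, (a < N.-1)%N -> (b < N.-1)%N ->
    mxe (invmx (LP R N p0 q0)) a b = gen R N H a.+1 b.+1.
  by move=> a b ha hb; rewrite eL mxe_gen.
have ek : forall i, (1 <= i < N)%N ->
    gen R N H 1 i + gen R N H N.-1 i =
    mxe (invmx (LP R N p0 q0)) 1.-1 i.-1 + mxe (invmx (LP R N p0 q0)) N.-1.-1 i.-1.
  move=> i /andP[i1 iN]; rewrite !key; try lia.
  by rewrite !prednK //; lia.
split.
- rewrite /E_r.
  rewrite (eq_big_nat _ _ (fun i hi => congr1 (fun z => z * i%:R) (ek i hi))).
  apply: cvgM; first exact: cvg_cst.
  apply: cvg_sumR => i; apply: cvgM; last exact: cvg_cst.
  rewrite /nent; apply: cvgD; apply: cvg_mxe; exact: cI.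
- rewrite /E_p.
  rewrite (eq_big_nat _ _ (fun i hi => congr1 (fun z => z * (N - i)%:R) (ek i hi))).
  apply: cvgM; first exact: cvg_cst.
  apply: cvg_sumR => i; apply: cvgM; last exact: cvg_cst.
  rewrite /nent; apply: cvgD; apply: cvg_mxe; exact: cI.
Qed.

End Main.

Section Vals.
Variable R : realType.

Lemma gen_r N H a i : (0 < i < N)%N ->
  gen R N H a i * i%:R = H a i * ((N ^ 2)%:R / (N - i)%:R).
Proof.
move=> /andP[i0 iN]; rewrite /gen /ucoef natrM.
have h1 : (i%:R : R) != 0 by rewrite pnatr_eq0 -lt0n.
have h2 : ((N - i)%:R : R) != 0 by rewrite pnatr_eq0 subn_eq0 -ltnNge.
have h3 : ((N ^ 2)%:R : R) != 0 by rewrite pnatr_eq0 expn_eq0; apply/negP; lia.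
have h4 : (N%:R : R) != 0 by rewrite pnatr_eq0; apply/negP; lia.
by field; rewrite h1 h2 h4.
Qed.

Lemma gen_p N H a i : (0 < i < N)%N ->
  gen R N H a i * (N - i)%:R = H a i * ((N ^ 2)%:R / i%:R).
Proof.
move=> /andP[i0 iN]; rewrite /gen /ucoef natrM.
have h1 : (i%:R : R) != 0 by rewrite pnatr_eq0 -lt0n.
have h2 : ((N - i)%:R : R) != 0 by rewrite pnatr_eq0 subn_eq0 -ltnNge.
have h3 : ((N ^ 2)%:R : R) != 0 by rewrite pnatr_eq0 expn_eq0; apply/negP; lia.
have h4 : (N%:R : R) != 0 by rewrite pnatr_eq0; apply/negP; lia.
by field; rewrite h1 h2 h4.
Qed.

Lemma sum_p N : \sum_(1 <= i < N) (N ^ 2)%:R / i%:R = (N ^ 2)%:R * harm R N :> R.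
Proof. by rewrite /harm mulr_sumr. Qed.

Lemma sum_r N : \sum_(1 <= i < N) (N ^ 2)%:R / (N - i)%:R = (N ^ 2)%:R * harm R N :> R.
Proof.
rewrite /harm mulr_sumr big_nat_rev /=.
apply: eq_big_nat => i /andP[i1 iN]; congr (_ / _%:R); lia.
Qed.

Lemma sum_nat_delta m n k (f : nat -> R) : (m <= k < n)%N ->
  \sum_(m <= i < n) (i == k)%:R * f i = f k.
Proof.
move=> /andP[mk kn].
have gen : forall n', \sum_(m <= i < n') (i == k)%:R * f i = (k < n')%N%:R * f k.
  elim=> [|n' IH]; first by rewrite big_geq // ltn0 mul0r.
  case: (leqP m n') => hm.
    rewrite big_nat_recr //= IH.
    case: (ltngtP k n') => [h|h|<-]; rewrite ?mul0r ?mul1r ?addr0 ?add0r //.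
    - by rewrite (_ : (k < n'.+1)%N = true) ?mul1r //; lia.
    - by rewrite (_ : (k < n'.+1)%N = false) ?mul0r //; lia.
    - by rewrite ltnSn mul1r.
  rewrite big_geq // (_ : (k < n'.+1)%N = false) ?mul0r //; lia.
by rewrite gen kn mul1r.
Qed.


Lemma sum_shape N (F w : nat -> R) k c0 c1 : (1 <= k < N)%N ->
  (forall i, (1 <= i < N)%N -> F i = (c0 + c1 * (i == k)%:R) * w i) ->
  \sum_(1 <= i < N) F i = c0 * \sum_(1 <= i < N) w i + c1 * w k.
Proof.
move=> hk hF; rewrite (eq_big_nat _ _ hF).
under eq_bigr do rewrite mulrDl.
rewrite big_split /= mulr_sumr; congr (_ + _).
under eq_bigr do rewrite -mulrA.
by rewrite -mulr_sumr sum_nat_delta.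
Qed.

Lemma val_r N H c0 c1 k : (1 <= k < N)%N ->
  (forall i, (1 <= i < N)%N -> H 1%N i + H N.-1 i = c0 + c1 * (i == k)%:R) ->
  \sum_(1 <= i < N) (gen R N H 1 i + gen R N H N.-1 i) * i%:R
  = c0 * ((N ^ 2)%:R * harm R N) + c1 * ((N ^ 2)%:R / (N - k)%:R).
Proof.
move=> hk hH.
rewrite (@sum_shape N _ (fun i => (N ^ 2)%:R / (N - i)%:R) k c0 c1 hk) ?sum_r // => i hi.
by rewrite mulrDl !gen_r // -mulrDl hH.
Qed.

Lemma val_p N H c0 c1 k : (1 <= k < N)%N ->
  (forall i, (1 <= i < N)%N -> H 1%N i + H N.-1 i = c0 + c1 * (i == k)%:R) ->
  \sum_(1 <= i < N) (gen R N H 1 i + gen R N H N.-1 i) * (N - i)%:R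
  = c0 * ((N ^ 2)%:R * harm R N) + c1 * ((N ^ 2)%:R / k%:R).
Proof.
move=> hk hH.
rewrite (@sum_shape N _ (fun i => (N ^ 2)%:R / i%:R) k c0 c1 hk) ?sum_p // => i hi.
by rewrite mulrDl !gen_p // -mulrDl hH.
Qed.

End Vals.

Lemma cvg_eq_lim (R : realType) (f : R -> R) (a b : R) : a = b ->
  f x @[x --> +oo] --> a -> f x @[x --> +oo] --> b.
Proof. by move=> ->. Qed.

Theorem theorem1 (R : realType) (N : nat) (delta theta : R) :
  (2 <= N)%N -> delta < 0 ->
  (E_r N delta theta beta @[beta --> +oo] -->
     (if theta < - delta then
        (N ^ 2)%:R * theta / 2 * ((N.-1)%:R^-1 + harm R N)
      else if theta == - delta then (N ^ 2)%:R * theta * harm R N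
      else (N ^ 2)%:R * theta / 2 * (1 + harm R N)))
  /\
  (E_p N delta theta beta @[beta --> +oo] -->
     (if theta < - delta then
        (N ^ 2)%:R * theta / 2 * (1 + harm R N)
      else if theta == - delta then (N ^ 2)%:R * theta * harm R N
      else (N ^ 2)%:R * theta / 2 * (harm R N + (N.-1)%:R^-1))).
Proof.
move=> N2 d0.
have h11 : (1 <= 1 < N)%N by lia.
have hN1 : (1 <= N.-1 < N)%N by lia.
have eNm : (N - N.-1)%N = 1%N by lia.
have eN1 : (N - 1)%N = N.-1 by lia.
have N0 : (N%:R : R) != 0 by rewrite pnatr_eq0; apply/negP; lia.
have N10 : (N.-1%:R : R) != 0 by rewrite pnatr_eq0; apply/negP; lia.
have ex0 : forall y : R, 1 + expR y != 0 by move=> y; rewrite gt_eqF // addr_gt0 ?expR_gt0.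
have eP : forall y : R, (1 + expR (- y))^-1 = expR y / (1 + expR y).
  move=> y; rewrite expRN.
  have := ex0 y; have : expR y != 0 by rewrite gt_eqF ?expR_gt0.
  by move=> a b; field; rewrite a b.
have eQ : forall y : R, (1 + expR y)^-1 = expR (- y) / (1 + expR (- y)).
  by move=> y; rewrite -eP opprK.
have [h|h|h] := ltgtP theta (-delta).
- (* theta < -delta : p -> 0, q -> 1 *)
  have eL : expR (xval b theta delta) @[b --> +oo] --> (0 : R).
    have -> : (fun b => expR (xval b theta delta)) =
              (fun b => expR (- (b * - (theta + delta)))).
      by apply: funext => b; rewrite /xval mulrN opprK.
    by apply: expR_lim; lra.
  have hQ := @inv1p_lim R _ eL.
  have hP : (1 + expR (- xval b theta delta))^-1 @[b --> +oo] --> (0 : R).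
    under eq_cvg do rewrite eP.
    exact: (@frac_lim R _ eL).
  have [hr hp] := @main_gen R N delta theta 0 1 (HC R) N2 hP hQ (@idC R N).
  have hC : forall i, (1 <= i < N)%N -> HC R 1%N i + HC R N.-1 i = 1 + 1 * (i == 1%N)%:R.
    move=> i hi; rewrite /HC (_ : (i <= 1)%N = (i == 1%N)); last by apply/idP/idP; lia.
    rewrite (_ : (i <= N.-1)%N = true); last by lia.
    by rewrite /= mulr1n mul1r addrC.
  split.
  + apply: (cvg_eq_lim _ _ _ _ _ hr); rewrite (@val_r R N (HC R) 1 1 1 h11 hC) eN1.
    by field; rewrite ?N0 ?N10.
  + apply: (cvg_eq_lim _ _ _ _ _ hp); rewrite (@val_p R N (HC R) 1 1 1 h11 hC).
    by field; rewrite ?N0 ?N10.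
- (* theta > -delta : p -> 1, q -> 0 *)
  have eL : expR (- xval b theta delta) @[b --> +oo] --> (0 : R).
    by rewrite /xval; apply: expR_lim; lra.
  have hP := @inv1p_lim R _ eL.
  have hQ : (1 + expR (xval b theta delta))^-1 @[b --> +oo] --> (0 : R).
    under eq_cvg do rewrite eQ.
    exact: (@frac_lim R _ eL).
  have [hr hp] := @main_gen R N delta theta 1 0 (HA R) N2 hP hQ (@idA R N).
  have hA : forall i, (1 <= i < N)%N -> HA R 1%N i + HA R N.-1 i = 1 + 1 * (i == N.-1)%:R.
    move=> i hi; rewrite /HA (_ : (N.-1 <= i)%N = (i == N.-1)); last by apply/idP/idP; lia.
    rewrite (_ : (1 <= i)%N = true); last by lia.
    by rewrite /= mulr1n mul1r.
  split.
  + apply: (cvg_eq_lim _ _ _ _ _ hr); rewrite (@val_r R N (HA R) 1 1 N.-1 hN1 hA) eNm.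
    by field; rewrite ?N0 ?N10.
  + apply: (cvg_eq_lim _ _ _ _ _ hp); rewrite (@val_p R N (HA R) 1 1 N.-1 hN1 hA).
    by field; rewrite ?N0 ?N10.
-
  have ex : forall b, xval b theta delta = 0 by move=> b; rewrite /xval h addNr mulr0.
  have e2 : (1 + expR (0 : R))^-1 = 2^-1 by rewrite expR0.
  have hP : (1 + expR (- xval b theta delta))^-1 @[b --> +oo] --> (2^-1 : R).
    under eq_cvg do rewrite ex oppr0 e2.
    exact: cvg_cst.
  have hQ : (1 + expR (xval b theta delta))^-1 @[b --> +oo] --> (2^-1 : R).
    under eq_cvg do rewrite ex e2.
    exact: cvg_cst.
  have [hr hp] := @main_gen R N delta theta 2^-1 2^-1 (HB R N) N2 hP hQ (@idB R N).
  have hB : forall i, (1 <= i < N)%N -> HB R N 1%N i + HB R N N.-1 i = 2 + 0 * (i == 1%N)%:R.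
    move=> i /andP[i1 iN]; rewrite mul0r addr0 HB_le // HB_ge; last by lia.
    rewrite -subn1 natrB; last by lia.
    by field; rewrite ?N0 ?N10.
  split.
  + apply: (cvg_eq_lim _ _ _ _ _ hr); rewrite (@val_r R N (HB R N) 2 0 1 h11 hB).
    rewrite eN1; by field; rewrite ?N0 ?N10.
  + apply: (cvg_eq_lim _ _ _ _ _ hp); rewrite (@val_p R N (HB R N) 2 0 1 h11 hB).
    by field; rewrite ?N0 ?N10.
Qed.
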